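(* Let $f:\{0,1\}^r\to\{0,1\}$ satisfy $f(0,\dots,0)=1$, and suppose $f$ does not contain $\mathrm{IMPL}$ as a $0$-restriction. If $S\subseteq T\subseteq[r]$ and $f(a_S)=f(a_T)=1$, then $f(a_{T\setminus S})=1$.
   Context: For $S\subseteq[r]$, $a_S\in\{0,1\}^r$ is the vector with ones exactly at the positions in $S$. $f$ contains $g:\{0,1\}^s\to\{0,1\}$ as a $0$-restriction if there are pairwise disjoint, possibly empty, sets $X_1,\dots,X_s,Z_0$ with union $[r]$ such that $g(x_1,\dots,x_s)=f(u)$, where $u_i=x_j$ for $i\in X_j$ and $u_i=0$ for $i\in Z_0$. $\mathrm{IMPL}(y_1,y_2)=\overline{y_1}\vee y_2$. *)

(* Defs.v *)
From mathcomp Require Import all_boot.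
Set Implicit Arguments. Unset Strict Implicit. Unset Printing Implicit Defensive.

Definition boolfun (r : nat) := {ffun 'I_r -> bool} -> bool.

Definition indvec (r : nat) (S : {set 'I_r}) : {ffun 'I_r -> bool} :=
  [ffun i => i \in S].

Definition zero_restriction (r s : nat) (f : boolfun r) (g : boolfun s) : Prop :=
  exists (X : 'I_s -> {set 'I_r}) (Z0 : {set 'I_r}),
    (forall j k : 'I_s, j != k -> [disjoint X j & X k]) /\
    (forall j : 'I_s, [disjoint X j & Z0]) /\
    (\bigcup_(j < s) X j) :|: Z0 = setT /\
    forall x : {ffun 'I_s -> bool},
      g x = f [ffun i => [exists j : 'I_s, (i \in X j) && x j]].

Definition IMPL : boolfun 2 :=
  fun y => ~~ y ord0 || y (Ordinal (isT : 1 < 2)).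

(* Main.v *)
Require Import Defs.
From mathcomp Require Import all_boot.

Lemma ex2P (P : 'I_2 -> bool) :
  [exists j : 'I_2, P j] = P ord0 || P (Ordinal (isT : 1 < 2)).
Proof.
apply/existsP/orP => [[j Hj]|[H|H]]; last 2 first.
- by exists ord0.
- by exists (Ordinal (isT : 1 < 2)).
case: j Hj => [[|[|m]] Hm] Hj //.
- by left; rewrite (_ : ord0 = Ordinal Hm) //; apply: val_inj.
- by right; rewrite (_ : Ordinal (isT : 1 < 2) = Ordinal Hm) //; apply: val_inj.
Qed.

Theorem mainTheorem15 (r : nat) (f : {ffun 'I_r -> bool} -> bool) :
  f (indvec (set0 : {set 'I_r})) = true ->
  ~ zero_restriction f IMPL ->
  forall S T : {set 'I_r}, S \subset T ->
    f (indvec S) = true -> f (indvec T) = true ->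
    f (indvec (T :\: S)) = true.
Proof.
move=> f0 nZ S T sST fS fT.
apply/negPn/negP => fD; apply: nZ.
pose o1 := Ordinal (isT : 1 < 2).
exists (fun j : 'I_2 => if j == ord0 then T :\: S else S), (~: T).
split.
  move=> j k; case: j => [[|[|m]] Hm] //; case: k => [[|[|n]] Hn] //= _.
  - by rewrite disjoints_subset; apply/subsetP => i; rewrite !inE => /andP[].
  - by rewrite disjoints_subset; apply/subsetP => i; rewrite !inE => ->.
split.
  move=> j; case: (j == ord0); rewrite disjoints_subset setCK.
  - by apply/subsetP => i; rewrite in_setD => /andP[_ ->].
  - exact: sST.
split.
  apply/setP => i; rewrite !inE; case: (boolP (i \in T)) => iT; rewrite ?orbT ?orbF //.
  case: (boolP (i \in S)) => iS; apply/bigcupP.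
  - by exists o1.
  - by exists ord0 => //; rewrite inE iS iT.
move=> x.
have -> : [ffun i => [exists j : 'I_2, (i \in (if j == ord0 then T :\: S else S)) && x j]]
   = indvec ((if x ord0 then T :\: S else set0) :|: (if x o1 then S else set0)).
  apply/ffunP => i; rewrite !ffunE ex2P /= !inE.
  by case: (x ord0); case: (x o1); rewrite /= ?inE ?andbT ?andbF ?orbF.
rewrite /IMPL -/o1.
case: (x ord0); case: (x o1) => /=.
- suff -> : T :\: S :|: S = T by [].
  apply/setP => i; rewrite !inE; case: (boolP (i \in S)) => iS /=.
  + by rewrite (subsetP sST i iS).
  + by rewrite orbF.
- by rewrite setU0; apply/esym/negbTE.
- by rewrite set0U.
- by rewrite setU0.
Qed.
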